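(* Let $p,q$ be positive integers with $\frac1p+\frac1q=\frac12$ and let $M$ be a $\{p,q\}$-map. Then the sum $I_v^b$ of the curvatures of the exterior vertices of $M$ satisfies $I_v^b\ge p$.
   Context: A map is a finite, connected, simply connected 2-complex embedded in the plane; degree of a vertex = number of oriented edges starting there (loops count twice), degree of a face = length of its boundary path. Exterior vertices are those on the boundary path of $M$. A $(p,q)$-map: every interior face has degree $\ge p$ and every interior vertex degree $\ge q$. A $\{p,q\}$-map is a $(p,q)$-map in which every face has degree at least $p$ and less than $2p$ and every vertex has degree less than $2q$. The curvature of a vertex $o$ is $\frac pq(q-d(o))-\mu(o)$, where $\mu(o)$ is the number of times the boundary path of $M$ passes through $o$. *)

(* Defs.v *)
From mathcomp Require Import all_boot all_order all_algebra perm.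
Set Implicit Arguments. Unset Strict Implicit. Unset Printing Implicit Defensive.
Import Order.TTheory GRing.Theory Num.Theory.

(* A map is encoded as a connected planar rotation system on the sphere
   (darts D, vertex rotation sigma, fixed-point-free edge involution alpha)
   together with a distinguished dart d0 whose face is the exterior face.
   The 2-complex M is the sphere minus the open exterior face. *)

Section Maps.
Variable D : finType.
Variables (sigma alpha : {perm D}) (d0 : D).

Definition phi (d : D) : D := sigma (alpha d).

Definition is_plane_map : Prop :=
  [/\ (forall d, alpha (alpha d) = d),
      (forall d, alpha d != d),
      (forall d e, connect [rel x y | (y == sigma x) || (y == alpha x)] d e)
    & (fcard sigma D + fcard phi D = #|D| %/ 2 + 2)%N].

Definition vdeg (d : D) : nat := fingraph.order sigma d.
Definition fdeg (d : D) : nat := fingraph.order phi d.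
Definition on_boundary (d : D) : bool := fconnect phi d0 d.
(* mu(o) : number of times the boundary path passes through the vertex o of d *)
Definition mu (d : D) : nat := #|[pred e | fconnect sigma d e && on_boundary e]|.
Definition interior_vertex (d : D) : bool := mu d == 0%N.

Definition pq_map (p q : nat) : Prop :=
  (forall d, ~~ on_boundary d -> p <= fdeg d)%N /\
  (forall d, interior_vertex d -> q <= vdeg d)%N.

Definition curly_pq_map (p q : nat) : Prop :=
  [/\ pq_map p q,
      (forall d, ~~ on_boundary d -> p <= fdeg d < 2 * p)%N
    & (forall d, vdeg d < 2 * q)%N].

Definition curvature (p q : nat) (d : D) : rat :=
  (p%:R / q%:R) * (q%:R - (vdeg d)%:R) - (mu d)%:R.

Definition Ivb (p q : nat) : rat :=
  \sum_(d in froots sigma | ~~ interior_vertex d) curvature p q d.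
End Maps.

(* Main.v *)
Set Warnings "-notation-overridden,-ambiguous-paths".
Require Import Defs.
From mathcomp Require Import all_boot all_order all_algebra perm.
Import Order.TTheory GRing.Theory Num.Theory.
From mathcomp Require Import ring lra.

Lemma sum_orbits (T : finType) (f : T -> T) (injf : injective f) (g : T -> nat) :
  (\sum_(x : T) g x = \sum_(r in froots f) \sum_(e | fconnect f r e) g e)%N.
Proof.
have sym := fconnect_sym injf.
rewrite (partition_big (froot f) (froots f)) /=; last first.
  by move=> x _; exact: (roots_root sym).
apply: eq_bigr => r rr; apply: eq_bigl => e /=.
by rewrite -[X in _ == X](eqP rr) (root_connect sym) sym.
Qed.

Lemma sum_cond_bool (T : finType) (P b : pred T) :
  (\sum_(e | P e) (b e : nat) = #|[pred e | P e && b e]|)%N.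
Proof.
rewrite -sum1_card [RHS]big_mkcond [LHS]big_mkcond; apply: eq_bigr => e _.
by rewrite inE; case: (P e); case: (b e).
Qed.

Section S.
Variables (D : finType) (sigma alpha : {perm D}) (d0 : D).
Hypothesis a2 : forall d, alpha (alpha d) = d.
Hypothesis anf : forall d, alpha d != d.
Lemma ordA x : fingraph.order alpha x = 2.
Proof.
have cyc : fcycle alpha [:: x; alpha x] by rewrite /= a2 !eqxx.
have u : uniq [:: x; alpha x] by rewrite /= inE eq_sym anf.
by rewrite (order_cycle cyc u (mem_head _ _)).
Qed.
Lemma evenD : (fcard alpha D * 2 = #|D|)%N.
Proof.
rewrite (@fcard_order_set _ alpha perm_inj 2 D) //.
  by apply/subsetP => x _; rewrite inE ordA.
Qed.
End S.

Lemma fcardE (D : finType) (f : D -> D) : fcard f D = #|froots f|.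
Proof. by apply: eq_card => x; rewrite !inE andbT. Qed.

Lemma sum_vdeg (D : finType) (sigma : {perm D}) :
  (\sum_(r in froots sigma) fingraph.order sigma r = #|D|)%N.
Proof.
rewrite -sum1_card (@sum_orbits _ sigma perm_inj); apply: eq_bigr => r _.
rewrite (@sum_cond_bool _ _ predT); apply: eq_card => e; by rewrite !inE andbT.
Qed.

Lemma sum_mu (D : finType) (sigma alpha : {perm D}) (d0 : D) :
  (\sum_(r in froots sigma) mu sigma alpha d0 r =
   #|[pred e | on_boundary sigma alpha d0 e]|)%N.
Proof.
rewrite -(@sum_cond_bool _ predT) (@sum_orbits _ sigma perm_inj); apply: eq_bigr => r _.
by rewrite sum_cond_bool.
Qed.

Lemma faces (D : finType) (sigma alpha : {perm D}) (d0 : D) (p : nat) :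
  (forall d, ~~ on_boundary sigma alpha d0 d -> p <= fdeg sigma alpha d)%N ->
  let K := #|[pred r | froots (phi sigma alpha) r && ~~ on_boundary sigma alpha d0 r]| in
  (p * K <= #|[pred e | ~~ on_boundary sigma alpha d0 e]|)%N /\
  (#|froots (phi sigma alpha)| <= K + 1)%N.
Proof.
move=> pf K.
have injp : injective (phi sigma alpha) by move=> x y /perm_inj /perm_inj.
have sym := fconnect_sym injp.
split.
  rewrite -(@sum_cond_bool _ predT) (@sum_orbits _ _ injp).
  rewrite (bigID (fun r => ~~ on_boundary sigma alpha d0 r)) /=.
  apply: leq_trans (leq_addr _ _).
  have -> : (p * K = \sum_(r in froots (phi sigma alpha) | ~~ on_boundary sigma alpha d0 r) p)%N.
    by rewrite mulnC; symmetry; exact: (sum_nat_const _ p).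
  apply: leq_sum => r /andP[_ nb].
  apply: leq_trans (pf r nb) _.
  rewrite sum_cond_bool /fdeg /fingraph.order; apply: subset_leq_card.
  apply/subsetP => e; rewrite !inE => ce; rewrite ce /=.
  apply: contra nb => be; rewrite /on_boundary.
  apply: connect_trans be _; by rewrite sym.
rewrite -(cardID (on_boundary sigma alpha d0) (froots (phi sigma alpha))) addnC.
apply: leq_add.
  by rewrite leq_eqVlt; apply/orP; left; apply/eqP; apply: eq_card => x; rewrite !inE andbC.
rewrite -(card1 (froot (phi sigma alpha) d0)); apply: subset_leq_card.
apply/subsetP => r; rewrite !inE => /andP[rr br].
by rewrite -(eqP rr) (root_connect sym) sym.
Qed.
Local Open Scope ring_scope.

Theorem lemma2p12 (p q : nat) (D : finType) (sigma alpha : {perm D}) (d0 : D) :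
  (0 < p)%N -> (0 < q)%N ->
  ((p%:R : rat)^-1 + (q%:R : rat)^-1 = 2%:R^-1)%R ->
  is_plane_map sigma alpha ->
  curly_pq_map sigma alpha d0 p q ->
  (p%:R <= Ivb sigma alpha d0 p q)%R.
Proof.
move=> p0 q0 hpq [a2 anf _ euler] [[pf pv] _ _].
have [hK hF] := @faces _ _ _ _ _ pf.
set K := #|_| in hK hF.
set L := #|[pred e | on_boundary sigma alpha d0 e]|.
have hL : (L + #|[pred e | ~~ on_boundary sigma alpha d0 e]| = #|D|)%N.
  by rewrite -(cardC [pred e | on_boundary sigma alpha d0 e]); congr (_ + _); apply: eq_card.
have ev := @evenD _ _ a2 anf.
rewrite !fcardE -ev mulnK // in euler.
set V := #|froots sigma| in euler.
set F := #|froots (phi sigma alpha)| in euler hF.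
set A := fcard alpha D in euler ev.
set P : rat := p%:R.
set Q : rat := q%:R.
have Qn0 : Q != 0 by rewrite pnatr_eq0 -lt0n.
have Pn0 : P != 0 by rewrite pnatr_eq0 -lt0n.
set c := P / Q.
have hc : P = 2 + 2 * c.
  have h2 : Q^-1 = 2^-1 - P^-1 by rewrite -hpq; ring.
  by rewrite /c h2; field.
have curvE r : curvature sigma alpha d0 p q r = P - c * (vdeg sigma r)%:R - (mu sigma alpha d0 r)%:R.
  by rewrite /curvature mulrBr (divfK Qn0).
have sumc : \sum_(r in froots sigma) curvature sigma alpha d0 p q r = P * V%:R - c * (#|D|)%:R - L%:R.
  rewrite (eq_bigr _ (fun r _ => curvE r)) !sumrB sumr_const -mulr_sumr -!natr_sum.
  by rewrite sum_vdeg sum_mu -[P *+ _]mulr_natr.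
have int0 : \sum_(r in froots sigma | interior_vertex sigma alpha d0 r) curvature sigma alpha d0 p q r <= 0.
  apply: sumr_le0 => r /andP[_ ir].
  rewrite /curvature (eqP ir) subr0.
  apply: mulr_ge0_le0; first by apply: divr_ge0.
  by rewrite subr_le0 ler_nat; apply: pv.
have split : \sum_(r in froots sigma) curvature sigma alpha d0 p q r =
   \sum_(r in froots sigma | interior_vertex sigma alpha d0 r) curvature sigma alpha d0 p q r
   + Ivb sigma alpha d0 p q.
  by rewrite /Ivb (bigID (interior_vertex sigma alpha d0)).
have key : P <= \sum_(r in froots sigma) curvature sigma alpha d0 p q r.
  rewrite sumc.
  have eV : (V%:R : rat) + F%:R = A%:R + 2 by rewrite -!natrD euler.
  have eD : (#|D|%:R : rat) = 2 * A%:R by rewrite -ev natrM mulrC.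
  have eL : (L%:R : rat) + #|[pred e | ~~ on_boundary sigma alpha d0 e]|%:R = #|D|%:R
    by rewrite -natrD hL.
  have hK' : P * K%:R <= #|[pred e | ~~ on_boundary sigma alpha d0 e]|%:R
    by rewrite -natrM ler_nat.
  have hF' : (F%:R : rat) <= K%:R + 1 by move: hF; rewrite -(ler_nat rat) natrD.
  have P0 : 0 <= P by [].
  have hPF : 0 <= P * (K%:R + 1 - F%:R) by apply: mulr_ge0 => //; rewrite subr_ge0.
  have eV' : (V%:R : rat) = A%:R + 2 - F%:R by lra.
  have ec : c * #|D|%:R = (P - 2) * A%:R by rewrite eD hc; ring.
  rewrite eV' ec.
  rewrite eD in eL.
  move: hPF hK'; rewrite !mulrDr ?mulrBr ?mulrBl ?mulrDr ?mulrDl ?mulrN. lra.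
lra.
Qed.
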